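(* Let $\Gamma\subseteq A$ be $\Bbbk$-algebras, $\sim$ an equivalence relation on $\mathrm{cfs}(\Gamma)$, and suppose $\Gamma$ is a strong Harish-Chandra block subalgebra of $A$ with respect to $\sim$. Let $B,C,D\in\mathrm{cfs}(\Gamma)/{\sim}$, $\mathfrak m\in\mathcal W(B)$ and $\mathfrak l\in\mathcal W(D)$. Then there is $\mathfrak n\in\mathcal W(C)$ such that $$A/(\mathfrak lA+A\mathfrak n)\cong(A/\mathfrak lA)(C)\quad\text{and}\quad A/(\mathfrak nA+A\mathfrak m)\cong(A/A\mathfrak m)(C)$$ as $(\Gamma,\Gamma)$-bimodules.
   Context: $\mathrm{cfs}(\Gamma)$: maximal two-sided ideals $\mathfrak m$ with $\dim\Gamma/\mathfrak m<\infty$. For a class $B$, $\mathcal W(B)=\{\mathfrak m_1\cdots\mathfrak m_k:k\ge0,\mathfrak m_i\in B\}$. For a left $\Gamma$-module $V$, $V(B)=\{v:\mathfrak mv=0$ for some $\mathfrak m\in\mathcal W(B)\}$; for a right $\Gamma$-module (such as $A/\mathfrak lA$), $V(B)=\{v:v\mathfrak m=0$ for some $\mathfrak m\in\mathcal W(B)\}$. A strong block module is one with $V=\bigoplus_BV(B)$ and each $V(B)$ killed by some element of $\mathcal W(B)$. $\Gamma$ is a strong Harish-Chandra block subalgebra of $A$ if for all $B$ and $\mathfrak m\in\mathcal W(B)$, the left module $A/A\mathfrak m$ and the right module $A/\mathfrak mA$ are strong block modules. *)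

(* Defs.v *)
From HB Require Import structures.
From mathcomp Require Import all_boot all_order all_algebra.
From Stdlib Require List.
Set Implicit Arguments. Unset Strict Implicit. Unset Printing Implicit Defensive.
Import GRing.Theory.
Local Open Scope ring_scope.

(* Setting: k a field, A a k-algebra (algType k), Gamma a (unital)
   k-subalgebra of A given as a predicate [G : {pred A}] with [subalg_closed G]. *)

Section HC.
Variables (k : fieldType) (A : algType k) (G : {pred A}).

Definition Gset : A -> Prop := fun x => x \in G.
Definition Aall : A -> Prop := fun _ => True.

(* I J := additive span of the products x * y, x in I, y in J.
   Used for products of ideals of Gamma, for lA and for Am. *)
Inductive spanMul (I J : A -> Prop) : A -> Prop :=
| spanMul0 : spanMul I J 0
| spanMulM x y : I x -> J y -> spanMul I J (x * y)
| spanMulD u v : spanMul I J u -> spanMul I J v -> spanMul I J (u + v).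

Definition addS (S T : A -> Prop) : A -> Prop :=
  fun a => exists s t, S s /\ T t /\ a = s + t.

Definition is_ideal (I : A -> Prop) : Prop :=
  [/\ forall x, I x -> x \in G,
      I 0,
      forall x y, I x -> I y -> I (x + y),
      forall g x, g \in G -> I x -> I (g * x)
    & forall g x, g \in G -> I x -> I (x * g)].

Definition is_max_ideal (I : A -> Prop) : Prop :=
  [/\ is_ideal I, ~ I 1 &
      forall J, is_ideal J -> (forall x, I x -> J x) ->
        (forall x, J x -> I x) \/ (forall x, x \in G -> J x)].

(* dim Gamma / I < oo : Gamma/I is spanned by the classes of finitely many
   elements of Gamma *)
Definition fin_codim (I : A -> Prop) : Prop :=
  exists s : seq A, all (fun x => x \in G) s /\
    forall g, g \in G -> exists c : 'I_(size s) -> k,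
      I (g - \sum_(i < size s) c i *: s`_i).

Definition cfs (m : A -> Prop) : Prop := is_max_ideal m /\ fin_codim m.

Definition equiv_on_cfs (R : (A -> Prop) -> (A -> Prop) -> Prop) : Prop :=
  [/\ forall m, cfs m -> R m m,
      forall m n, cfs m -> cfs n -> R m n -> R n m
    & forall m n p, cfs m -> cfs n -> cfs p -> R m n -> R n p -> R m p].

Definition cfs_class (R : (A -> Prop) -> (A -> Prop) -> Prop)
  (B : (A -> Prop) -> Prop) : Prop :=
  exists m0, cfs m0 /\ forall m, B m <-> (cfs m /\ R m0 m).

Definition idealProd (ms : seq (A -> Prop)) : A -> Prop :=
  foldr spanMul Gset ms.

Definition inW (B : (A -> Prop) -> Prop) (n : A -> Prop) : Prop :=
  exists ms : seq (A -> Prop), List.Forall B ms /\ n = idealProd ms.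

(* For a Gamma-module A/S with action [act] (act x a = x * a for a left
   module, a * x for a right module), the class of a lies in (A/S)(B). *)
Definition partOf (act : A -> A -> A) (B : (A -> Prop) -> Prop)
  (S : A -> Prop) (a : A) : Prop :=
  exists n, inW B n /\ forall x, n x -> S (act x a).

Definition lact (x a : A) : A := x * a.
Definition ract (x a : A) : A := a * x.

Definition leftPart := partOf lact.
Definition rightPart := partOf ract.

Definition strong_block (R : (A -> Prop) -> (A -> Prop) -> Prop)
  (act : A -> A -> A) (S : A -> Prop) : Prop :=
  [/\
      forall a, exists (n : nat) (Bs : 'I_n -> ((A -> Prop) -> Prop))
                       (as_ : 'I_n -> A),
        [/\ forall i, cfs_class R (Bs i),
            forall i, partOf act (Bs i) S (as_ i)
          & S (a - \sum_(i < n) as_ i)],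
      forall (n : nat) (Bs : 'I_n -> ((A -> Prop) -> Prop)) (as_ : 'I_n -> A),
        (forall i, cfs_class R (Bs i)) ->
        (forall i j, i != j -> Bs i <> Bs j) ->
        (forall i, partOf act (Bs i) S (as_ i)) ->
        S (\sum_(i < n) as_ i) -> forall i, S (as_ i)
    &
      forall B, cfs_class R B ->
        exists n, inW B n /\ forall a, partOf act B S a ->
          forall x, n x -> S (act x a)].

Definition strong_HC_block (R : (A -> Prop) -> (A -> Prop) -> Prop) : Prop :=
  forall B, cfs_class R B -> forall m, inW B m ->
    strong_block R lact (spanMul Aall m) /\ strong_block R ract (spanMul m Aall).

(* The (Gamma,Gamma)-bimodule A/S1 is isomorphic to the sub-bimodule
   P2/S2 of A/S2 (P2 a subset of A containing S2); the isomorphism is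
   given on representatives. *)
Definition bimod_iso (S1 P2 S2 : A -> Prop) : Prop :=
  exists f : A -> A,
    (forall a b, S1 (a - b) -> S2 (f a - f b)) /\
    (forall a, P2 (f a)) /\
    (forall a b, S2 (f (a + b) - (f a + f b))) /\
    (forall (c : k) a, S2 (f (c *: a) - c *: f a)) /\
      (forall g a, g \in G -> S2 (f (g * a) - g * f a)) /\
      (forall g a, g \in G -> S2 (f (a * g) - f a * g)) /\
    (forall a, S2 (f a) -> S1 a) /\
    (forall b, P2 b -> exists a, S2 (f a - b)).

End HC.

(* Main.v *)
Require Import Defs.
From mathcomp Require Import all_boot all_order all_algebra.
From Stdlib Require Import FunctionalExtensionality PropExtensionality ClassicalEpsilon.
From Stdlib Require List.
Set Implicit Arguments. Unset Strict Implicit. Unset Printing Implicit Defensive.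
Import GRing.Theory.
Local Open Scope ring_scope.

Section Gen.
Variables (k : fieldType) (A : algType k) (G : {pred A}).
Hypothesis HG : subalg_closed G.

Lemma G1 : 1 \in G. Proof. by case: HG. Qed.
Lemma GD x y : x \in G -> y \in G -> x + y \in G.
Proof. case: HG => _ Hl _ hx hy. by have := Hl 1 _ _ hx hy; rewrite scale1r. Qed.
Lemma GB x y : x \in G -> y \in G -> x - y \in G.
Proof. case: HG => _ Hl _ hx hy. by have := GRing.linear_closedB Hl hx hy. Qed.
Lemma GM x y : x \in G -> y \in G -> x * y \in G.
Proof. case: HG => _ _ Hm hx hy. exact: Hm. Qed.
Lemma G0 : 0 \in G. Proof. by rewrite -(subrr 1) GB ?G1. Qed.

Definition comax (I J : A -> Prop) := exists u v, I u /\ J v /\ u + v = 1.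

Lemma comax_sym I J : comax I J -> comax J I.
Proof. by case=> u [v [Iu [Jv e]]]; exists v, u; rewrite addrC. Qed.

Lemma comax_mulr I J J' : is_ideal G I -> (forall x, J x -> x \in G) ->
  (forall x, J' x -> x \in G) -> comax I J -> comax I J' -> comax I (spanMul J J').
Proof.
case=> IG I0 ID Il Ir JG J'G [u [v [Iu [Jv e]]]] [u' [v' [Iu' [Jv' e']]]].
exists (u * u' + u * v' + v * u'), (v * v'); split; last split.
- apply ID; first apply ID.
  + by apply: Ir => //; apply: IG.
  + by apply: Ir => //; apply: J'G.
  + by apply: Il => //; apply: JG.
- exact: spanMulM.
- have -> : 1 = (u + v) * (u' + v') by rewrite e e' mulr1.
  by rewrite mulrDl !mulrDr !addrA.
Qed.

Lemma comax_mull I I' J : is_ideal G J -> (forall x, I x -> x \in G) ->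
  (forall x, I' x -> x \in G) -> comax I J -> comax I' J -> comax (spanMul I I') J.
Proof.
move=> HJ HI HI' c1 c2; apply: comax_sym; apply: comax_mulr => //; exact: comax_sym.
Qed.

Lemma spanMul_ideal I J : is_ideal G I -> is_ideal G J -> is_ideal G (spanMul I J).
Proof.
case=> IG I0 ID Il Ir [JG J0 JD Jl Jr]; split.
- move=> x; elim=> [|a b Ia Jb|u v _ hu _ hv]; first exact: G0.
  + by apply: GM; [apply: IG|apply: JG].
  + exact: GD.
- exact: spanMul0.
- move=> x y hx hy; exact: spanMulD.
- move=> g x hg; elim=> [|a b Ia Jb|u v _ hu _ hv].
  + by rewrite mulr0; apply: spanMul0.
  + by rewrite mulrA; apply: spanMulM => //; apply: Il.
  + by rewrite mulrDr; apply: spanMulD.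
- move=> g x hg; elim=> [|a b Ia Jb|u v _ hu _ hv].
  + by rewrite mul0r; apply: spanMul0.
  + by rewrite -mulrA; apply: spanMulM => //; apply: Jr.
  + by rewrite mulrDl; apply: spanMulD.
Qed.

Lemma Gset_ideal : is_ideal G (Gset G).
Proof.
split; rewrite /Gset //; [exact: G0|exact: GD|move=> *; exact: GM|move=> *; exact: GM].
Qed.

Lemma idealProd_ideal ms : List.Forall (is_ideal G) ms -> is_ideal G (idealProd G ms).
Proof.
elim: ms => [|m ms IH] /=; first by move=> _; exact: Gset_ideal.
move=> H; inversion H; subst; apply: spanMul_ideal => //; exact: IH.
Qed.

Lemma cfs_ideal m : cfs G m -> is_ideal G m.
Proof. by case=> [[]]. Qed.


Variable R : (A -> Prop) -> (A -> Prop) -> Prop.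
Hypothesis HR : equiv_on_cfs G R.

Lemma class_cfs B m : cfs_class G R B -> B m -> cfs G m.
Proof. by case=> m0 [_ H] /H []. Qed.

Lemma inW_ideal B n : cfs_class G R B -> inW G B n -> is_ideal G n.
Proof.
move=> HB [ms [Hms ->]]; apply: idealProd_ideal.
apply: List.Forall_impl Hms => m Bm; apply: cfs_ideal; exact: class_cfs Bm.
Qed.

Lemma class_sub B C x : cfs_class G R B -> cfs_class G R C -> B x -> C x ->
  forall y, B y -> C y.
Proof.
case: HR => _ Hs Ht.
case=> b0 [cb HB] [c0 [cc HC]] /HB [cx Rbx] /HC [_ Rcx] y /HB [cy Rby].
apply/HC; split => //.
apply: (Ht c0 b0 y) => //; apply: (Ht c0 x b0) => //; exact: Hs.
Qed.

Lemma inW_sub B C n : (forall y, B y -> C y) -> inW G B n -> inW G C n.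
Proof. move=> H [ms [Hms ->]]; exists ms; split => //; exact: List.Forall_impl Hms. Qed.

Lemma comax_max m n : cfs G m -> cfs G n -> m <> n -> comax m n.
Proof.
move=> [[Im Nm1 Mm] _] [[In Nn1 Mn] _] mn.
have Hid : is_ideal G (addS m n).
  case: Im => mG m0 mD ml mr; case: In => nG n0 nD nl nr; split.
  - by move=> x [s [t [ms [nt ->]]]]; apply: GD; [apply: mG|apply: nG].
  - by exists 0, 0; rewrite addr0.
  - move=> x y [s [t [ms [nt ->]]]] [s' [t' [ms' [nt' ->]]]].
    exists (s + s'), (t + t'); split; [exact: mD|split; [exact: nD|]].
    by rewrite addrACA.
  - move=> g x hg [s [t [ms [nt ->]]]]; exists (g * s), (g * t).
    by rewrite mulrDr; split; [exact: ml|split; [exact: nl|]].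
  - move=> g x hg [s [t [ms [nt ->]]]]; exists (s * g), (t * g).
    by rewrite mulrDl; split; [exact: mr|split; [exact: nr|]].
have sub : forall x, m x -> addS m n x.
  by move=> x mx; exists x, 0; rewrite addr0; split => //; split => //; case: In.
case: (Mm _ Hid sub) => [H|H].
- exfalso; apply: mn.
  have nm : forall x, n x -> m x.
    by move=> x nx; apply: H; exists 0, x; rewrite add0r; split => //; case: Im.
  case: (Mn _ Im nm) => [mn'|mG].
  + apply: functional_extensionality => x; apply: propositional_extensionality.
    by split; [apply: mn'|apply: nm].
  + by exfalso; apply: Nm1; apply: mG; exact: G1.
- case: (H 1 G1) => u [v [mu [nv e]]]; exists u, v; split => //.
Qed.

Lemma comax_W B C M N : cfs_class G R B -> cfs_class G R C ->
  ~ (exists x, B x /\ C x) -> inW G B M -> inW G C N -> comax M N.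
Proof.
move=> HB HC dis [ms [Hms ->]] [ns [Hns ->]].
have base : forall m n, B m -> C n -> comax m n.
  move=> m n Bm Cn; apply: comax_max; [exact: class_cfs Bm|exact: class_cfs Cn|].
  by move=> e; apply: dis; exists m; rewrite {2}e.
have idN : is_ideal G (idealProd G ns).
  by apply: idealProd_ideal; apply: List.Forall_impl Hns => n Cn; apply: cfs_ideal; exact: class_cfs Cn.
elim: Hms => [|m ms' Bm Hms' IH] /=.
- apply: comax_sym; exists 0, 1; rewrite add0r; split; first by case: idN.
  by split => //; exact: G1.
- have Im : is_ideal G m by apply: cfs_ideal; exact: class_cfs Bm.
  apply: comax_mull => //.
  + by case: Im.
  + case: (idealProd_ideal (ms := ms')) => //.
    by apply: List.Forall_impl Hms' => x Bx; apply: cfs_ideal; exact: class_cfs Bx.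
  + clear IH; elim: Hns {idN} => [|n ns' Cn Hns' IH'] /=.
    * exists 0, 1; rewrite add0r; split; first by case: Im.
      by split => //; exact: G1.
    * apply: comax_mulr => //.
      -- by case: (cfs_ideal (class_cfs HC Cn)).
      -- case: (idealProd_ideal (ms := ns')) => //.
         by apply: List.Forall_impl Hns' => x Cx; apply: cfs_ideal; exact: class_cfs Cx.
      -- exact: base.
Qed.

Section Core.
Variable op : A -> A -> A.
Hypotheses (opA : forall x y z, op (op x y) z = op x (op y z))
  (op1r : forall x, op x 1 = x)
  (opDl : forall x y z, op (x + y) z = op x z + op y z)
  (opDr : forall x y z, op x (y + z) = op x y + op x z)
  (opZl : forall (c : k) x y, op (c *: x) y = c *: op x y)
  (opNr : forall x y, op x (- y) = - op x y)
  (opNl : forall x y, op (- x) y = - op x y)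
  (op0l : forall x, op 0 x = 0)
  (opG : forall x y, x \in G -> y \in G -> op x y \in G)
  (opI : forall I, is_ideal G I -> forall g x, g \in G -> I x -> I (op g x) /\ I (op x g)).
Variable S : A -> Prop.
Hypotheses (S0 : S 0) (SD : forall x y, S x -> S y -> S (x + y))
  (SZ : forall (c : k) x, S x -> S (c *: x))
  (Sr : forall x a, S x -> S (op x a))
  (Sl : forall g x, g \in G -> S x -> S (op g x)).
Variable C : (A -> Prop) -> Prop.
Hypothesis HC : cfs_class G R C.
Variable K : A -> Prop.
Hypothesis HK : inW G C K.
Hypothesis Kkill : forall a, partOf G (fun x a => op a x) C S a -> forall x, K x -> S (op a x).
Hypothesis Hdec : forall a, exists (n : nat) (Bs : 'I_n -> ((A -> Prop) -> Prop)) (as_ : 'I_n -> A),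
  [/\ forall i, cfs_class G R (Bs i), forall i, partOf G (fun x a => op a x) (Bs i) S (as_ i)
    & S (a - \sum_(i < n) as_ i)].

Definition Qk y := forall x, K x -> S (op y x).
Definition Pk z := exists e, K (1 - e) /\ forall g, g \in G -> S (op (op z g) e).

Lemma SN x : S x -> S (- x). Proof. by move=> h; rewrite -scaleN1r; apply: SZ. Qed.

Lemma KI : is_ideal G K. Proof. exact: inW_ideal HC HK. Qed.
Lemma KG x : K x -> x \in G. Proof. by case: KI => H *; apply: H. Qed.
Lemma K0 : K 0. Proof. by case: KI. Qed.
Lemma KD x y : K x -> K y -> K (x + y). Proof. by case: KI => _ _ H *; apply: H. Qed.

Lemma Q0 : Qk 0. Proof. by move=> x _; rewrite op0l. Qed.
Lemma QD x y : Qk x -> Qk y -> Qk (x + y).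
Proof. by move=> hx hy z kz; rewrite opDl; apply: SD; [apply: hx|apply: hy]. Qed.
Lemma QN x : Qk x -> Qk (- x).
Proof. by move=> hx z kz; rewrite opNl; apply: SN; apply: hx. Qed.
Lemma QZ c x : Qk x -> Qk (c *: x).
Proof. by move=> hx z kz; rewrite opZl; apply: SZ; apply: hx. Qed.
Lemma Ql g x : g \in G -> Qk x -> Qk (op g x).
Proof. by move=> hg hx z kz; rewrite opA; apply: Sl => //; apply: hx. Qed.
Lemma Qr g x : g \in G -> Qk x -> Qk (op x g).
Proof. by move=> hg hx z kz; rewrite opA; apply: hx; case: (opI KI hg kz). Qed.

Lemma PS z : S z -> Pk z.
Proof.
move=> hz; exists 1; rewrite subrr; split; first exact: K0.
by move=> g _; rewrite op1r; apply: Sr.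
Qed.
Lemma P0 : Pk 0. Proof. exact: PS. Qed.

Lemma PD z1 z2 : Pk z1 -> Pk z2 -> Pk (z1 + z2).
Proof.
move=> [e1 [k1 h1]] [e2 [k2 h2]].
have e1G : e1 \in G.
  have E : 1 - (1 - e1) = e1 by rewrite opprB addrC subrK.
  by rewrite -E; apply: GB; [exact: G1|exact: KG].
exists (op e1 e2); split.
- have -> : 1 - op e1 e2 = (1 - e1) + op e1 (1 - e2).
    by rewrite opDr opNr op1r addrA subrK.
  by apply: KD => //; case: (opI KI e1G k2).
- move=> g hg; rewrite opDl opDl; apply: SD.
  + by rewrite -opA; apply: Sr; apply: h1.
  + by rewrite -opA (opA z2 g e1); apply: h2; apply: opG.
Qed.

Lemma PZ c z : Pk z -> Pk (c *: z).
Proof. by move=> [e [ke h]]; exists e; split => // g hg; rewrite !opZl; apply: SZ; apply: h. Qed.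
Lemma PN z : Pk z -> Pk (- z).
Proof. by move=> hz; rewrite -scaleN1r; apply: PZ. Qed.
Lemma PB z1 z2 : Pk z1 -> Pk z2 -> Pk (z1 - z2).
Proof. by move=> h1 h2; apply: PD => //; apply: PN. Qed.
Lemma Pl g z : g \in G -> Pk z -> Pk (op g z).
Proof. by move=> hg [e [ke h]]; exists e; split => // g' hg'; rewrite !opA; apply: Sl => //; rewrite -opA; apply: h. Qed.
Lemma Pr g z : g \in G -> Pk z -> Pk (op z g).
Proof. by move=> hg [e [ke h]]; exists e; split => // g' hg'; rewrite (opA z); apply: h; apply: opG. Qed.

Lemma Pkill z M : is_ideal G M -> (forall x, M x -> S (op z x)) -> comax K M -> Pk z.
Proof.
move=> IM hM [u [v [Ku [Mv e]]]]; exists v; split.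
- by rewrite -e addrK.
- move=> g hg; rewrite opA; apply: hM; by case: (opI IM hg Mv).
Qed.

Lemma KL y : Qk y -> Pk y -> S y.
Proof.
move=> hq [e [ke h]].
have -> : y = op y e + op y (1 - e) by rewrite -opDr addrC subrK op1r.
apply: SD; last by apply: hq.
by rewrite -{1}(op1r y); apply: h; exact: G1.
Qed.

Lemma dec a : exists c, Qk c /\ Pk (a - c).
Proof.
case: (Hdec a) => N [Bs [as_ [HB Hp Hs]]].
pose b i := if excluded_middle_informative (exists x, Bs i x /\ C x) then true else false.
exists (\sum_(i < N | b i) as_ i); split.
- apply: (big_ind Qk Q0 QD) => i; rewrite /b.
  case: excluded_middle_informative => // [[x [Bx Cx]]] _.
  apply: Kkill; case: (Hp i) => M [WM hM]; exists M; split => //.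
  by apply: inW_sub WM; apply: class_sub Bx Cx.
- have -> : a - \sum_(i < N | b i) as_ i =
     (a - \sum_(i < N) as_ i) + \sum_(i < N | ~~ b i) as_ i.
    by rewrite [X in _ = a - X + _](bigID b) /= opprD addrA subrK.
  apply: PD; first exact: PS.
  apply: (big_ind Pk P0 PD) => i; rewrite /b.
  case: excluded_middle_informative => // nx _.
  case: (Hp i) => M [WM hM].
  apply: (@Pkill _ M); [exact: inW_ideal WM|exact: hM|].
  apply: (comax_W HC (HB i)) => //.
  by move=> [x [Cx Bx]]; apply: nx; exists x.
Qed.

Definition fk a := proj1_sig (constructive_indefinite_description _ (dec a)).
Lemma fQ a : Qk (fk a). Proof. by rewrite /fk; case: constructive_indefinite_description => c []. Qed.
Lemma fP a : Pk (a - fk a). Proof. by rewrite /fk; case: constructive_indefinite_description => c []. Qed.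

Lemma PSO a x : K x -> Pk (op a x).
Proof.
move=> kx; have -> : op a x = op (fk a) x + op (a - fk a) x by rewrite -opDl addrC subrK.
apply: PD; first by apply: PS; apply: fQ.
by apply: Pr; [exact: KG|exact: fP].
Qed.

Lemma key x y : Qk (fk x - y) -> Pk (x - y) -> S (fk x - y).
Proof.
move=> hq hp; apply: KL => //.
have -> : fk x - y = (x - y) - (x - fk x) by rewrite opprB [RHS]addrC addrA subrK.
by apply: PB => //; apply: fP.
Qed.

Lemma c1 a b : Pk (a - b) -> S (fk a - fk b).
Proof.
move=> h; apply: key; first by apply: QD; [apply: fQ|apply: QN; apply: fQ].
have -> : a - fk b = (a - b) + (b - fk b) by rewrite addrA subrK.
by apply: PD => //; apply: fP.
Qed.

Lemma c3 a b : S (fk (a + b) - (fk a + fk b)).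
Proof.
apply: key; first by apply: QD; [apply: fQ|apply: QN; apply: QD; apply: fQ].
have -> : a + b - (fk a + fk b) = (a - fk a) + (b - fk b) by rewrite opprD addrACA.
by apply: PD; apply: fP.
Qed.

Lemma c4 c a : S (fk (c *: a) - c *: fk a).
Proof.
apply: key; first by apply: QD; [apply: fQ|apply: QN; apply: QZ; apply: fQ].
by rewrite -scalerBr; apply: PZ; apply: fP.
Qed.

Lemma c5 g a : g \in G -> S (fk (op g a) - op g (fk a)).
Proof.
move=> hg; apply: key; first by apply: QD; [apply: fQ|apply: QN; apply: Ql => //; apply: fQ].
by rewrite -opNr -opDr; apply: Pl => //; apply: fP.
Qed.

Lemma c6 g a : g \in G -> S (fk (op a g) - op (fk a) g).
Proof.
move=> hg; apply: key; first by apply: QD; [apply: fQ|apply: QN; apply: Qr => //; apply: fQ].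
by rewrite -opNl -opDl; apply: Pr => //; apply: fP.
Qed.

Lemma c7 a : S (fk a) -> exists s z e, S s /\ K e /\ a = s + op z e.
Proof.
move=> hs; case: (fP a) => e [ke h].
exists (fk a + op (a - fk a) e), (a - fk a), (1 - e); split; last split => //.
- by apply: SD => //; rewrite -{1}(op1r (a - fk a)); apply: h; exact: G1.
- by rewrite -addrA -opDr [e + _]addrC subrK op1r addrC subrK.
Qed.

Lemma c8 b : Qk b -> S (fk b - b).
Proof.
move=> hb; apply: key; first by apply: QD => //; [apply: fQ|apply: QN].
by rewrite subrr; exact: P0.
Qed.

Lemma core_main : exists f : A -> A,
  [/\ forall T : A -> Prop,
        (forall Pr : A -> Prop, Pr 0 -> (forall a x, K x -> Pr (op a x)) ->
           (forall u v, Pr u -> Pr v -> Pr (u + v)) -> forall t, T t -> Pr t) ->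
        forall a b s t, S s -> T t -> a - b = s + t -> S (f a - f b),
      forall a x, K x -> S (op (f a) x),
      forall a b, S (f (a + b) - (f a + f b))
    & forall (c : k) a, S (f (c *: a) - c *: f a)] /\
  [/\ forall g a, g \in G -> S (f (op g a) - op g (f a)),
      forall g a, g \in G -> S (f (op a g) - op (f a) g),
      forall a, S (f a) -> exists s z e, S s /\ K e /\ a = s + op z e
    & forall b, (forall x, K x -> S (op b x)) -> S (f b - b)].
Proof.
exists fk; split; split.
- move=> T HT a b s t hs ht e; apply: c1; rewrite e; apply: PD; first exact: PS.
  apply: (HT Pk) => //; [exact: P0|exact: PSO|exact: PD].
- exact: fQ.
- exact: c3.
- exact: c4.
- exact: c5.
- exact: c6.
- exact: c7.
- exact: c8.
Qed.

End Core.

Lemma ideal_r I : is_ideal G I -> forall g x, g \in G -> I x -> I (g * x) /\ I (x * g).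
Proof. by case=> _ _ _ Il Ir g x hg hx; split; [apply: Il|apply: Ir]. Qed.
Lemma ideal_l I : is_ideal G I -> forall g x, g \in G -> I x -> I (x * g) /\ I (g * x).
Proof. by case=> _ _ _ Il Ir g x hg hx; split; [apply: Ir|apply: Il]. Qed.

Lemma spanMul_mono (I J I' J' : A -> Prop) : (forall x, I x -> I' x) -> (forall x, J x -> J' x) ->
  forall x, spanMul I J x -> spanMul I' J' x.
Proof.
move=> hI hJ x; elim=> [|a b Ia Jb|u v _ hu _ hv]; first exact: spanMul0.
- by apply: spanMulM; [apply: hI|apply: hJ].
- exact: spanMulD.
Qed.

Lemma spanMul_assoc (I J L : A -> Prop) x : spanMul I (spanMul J L) x -> spanMul (spanMul I J) L x.
Proof.
elim=> [|a b Ia Jb|u v _ hu _ hv]; first exact: spanMul0.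
- elim: Jb => [|c d Jc Ld|p q _ hp _ hq].
  + by rewrite mulr0; apply: spanMul0.
  + by rewrite mulrA; apply: spanMulM => //; apply: spanMulM.
  + by rewrite mulrDr; apply: spanMulD.
- exact: spanMulD.
Qed.

Lemma foldr_sub (X : A -> Prop) ms x : foldr (@spanMul k A) X ms x -> spanMul (idealProd G ms) X x.
Proof.
elim: ms x => [|m ms IH] x /=.
- by move=> hx; rewrite -[x]mul1r; apply: spanMulM => //; exact: G1.
- move=> hx; apply: spanMul_assoc; apply: spanMul_mono hx => // y; exact: IH.
Qed.

Lemma idealProd_cat ms1 ms2 x : idealProd G (ms1 ++ ms2) x ->
  spanMul (idealProd G ms1) (idealProd G ms2) x.
Proof. by rewrite /idealProd foldr_cat; apply: foldr_sub. Qed.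

Lemma spanMulZ (I : A -> Prop) (c : k) x : spanMul I (Aall (A:=A)) x -> spanMul I (Aall (A:=A)) (c *: x).
Proof.
elim=> [|a b Ia Jb|u v _ hu _ hv].
- by rewrite scaler0; apply: spanMul0.
- by rewrite scalerAr; apply: spanMulM.
- by rewrite scalerDr; apply: spanMulD.
Qed.

Lemma spanMulZ' (I : A -> Prop) (c : k) x : spanMul (Aall (A:=A)) I x -> spanMul (Aall (A:=A)) I (c *: x).
Proof.
elim=> [|a b Ia Jb|u v _ hu _ hv].
- by rewrite scaler0; apply: spanMul0.
- by rewrite scalerAl; apply: spanMulM.
- by rewrite scalerDr; apply: spanMulD.
Qed.

End Gen.

Theorem mainTheorem18 (k : fieldType) (A : algType k) (G : {pred A})
  (R : (A -> Prop) -> (A -> Prop) -> Prop) :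
  subalg_closed G ->
  equiv_on_cfs G R ->
  strong_HC_block G R ->
  forall B C D : (A -> Prop) -> Prop,
    cfs_class G R B -> cfs_class G R C -> cfs_class G R D ->
  forall m l : A -> Prop, inW G B m -> inW G D l ->
  exists n : A -> Prop, inW G C n /\
    bimod_iso G (addS (spanMul l (@Aall _ A)) (spanMul (@Aall _ A) n))
              (rightPart G C (spanMul l (@Aall _ A))) (spanMul l (@Aall _ A)) /\
    bimod_iso G (addS (spanMul n (@Aall _ A)) (spanMul (@Aall _ A) m))
              (leftPart G C (spanMul (@Aall _ A) m)) (spanMul (@Aall _ A) m).
Proof.
move=> HG HR HHC B C D HB HC HD m l HWm HWl.
have [_ Hlr] := HHC D HD l HWl.
have [Hml _] := HHC B HB m HWm.
case: Hlr => dec1 _ kill1; case: Hml => dec2 _ kill2.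
case: (kill1 C HC) => K1 [W1 k1]; case: (kill2 C HC) => K2 [W2 k2].
have I1 := inW_ideal HG HC W1; have I2 := inW_ideal HG HC W2.
have Il := inW_ideal HG HD HWl; have Im := inW_ideal HG HB HWm.
case: W1 => ms1 [F1 E1]; case: W2 => ms2 [F2 E2].
pose n := idealProd G (ms1 ++ ms2).
have Wn : inW G C n by exists (ms1 ++ ms2); split => //; apply List.Forall_app; split.
have nsub : forall x, n x -> spanMul K1 K2 x by rewrite E1 E2; apply: idealProd_cat.
have In : is_ideal G n := inW_ideal HG HC Wn.
exists n; split => //; split.
-
  pose S := spanMul l (@Aall _ A).
  have S0 : S 0 by exact: spanMul0.
  have SD : forall x y, S x -> S y -> S (x + y) by move=> x y; exact: spanMulD.
  have SZ : forall (c : k) x, S x -> S (c *: x) by move=> c x; exact: spanMulZ.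
  have Sr : forall x a, S x -> S (x * a).
    move=> x a; elim=> [|u v lu _|u v _ hu _ hv].
    + by rewrite mul0r.
    + by rewrite -mulrA; apply: spanMulM.
    + by rewrite mulrDl; apply: SD.
  have Sl : forall g x, g \in G -> S x -> S (g * x).
    move=> g x hg; elim=> [|u v lu _|u v _ hu _ hv].
    + by rewrite mulr0.
    + by rewrite mulrA; apply: spanMulM => //; case: (ideal_r Il hg lu).
    + by rewrite mulrDr; apply: SD.
  have Kkill : forall a, partOf G (fun x a => a * x) C S a -> forall x, n x -> S (a * x).
    move=> a pa x /nsub; elim=> [|y z y1 z2|u v _ hu _ hv].
    + by rewrite mulr0.
    + by rewrite mulrA; apply: Sr; apply: (k1 a pa).
    + by rewrite mulrDr; apply: SD.
  have [f [[h1 h2 h3 h4] [h5 h6 h7 h8]]] :=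
    @core_main k A G HG R HR (fun x y => x * y) (fun x y z => esym (mulrA x y z)) (@mulr1 _)
      (@mulrDl _) (@mulrDr _) (fun c x y => esym (scalerAl c x y)) (@mulrN _) (@mulNr _) (@mul0r _)
      (GM HG) (ideal_r (G:=G)) S S0 SD SZ Sr Sl C HC n Wn Kkill dec1.
  exists f; split; last split; last split; last split; last split; last split; last split.
  + move=> a b [s [t [hs [ht e]]]]; apply: (h1 (spanMul (@Aall _ A) n)) _ _ _ s t hs ht e.
    move=> Pr P0 Pop PD t0; elim=> [|u v _ nv|u v _ hu _ hv]; [exact: P0|exact: Pop|exact: PD].
  + by move=> a; exists n; split => // x nx; apply: h2.
  + exact: h3.
  + exact: h4.
  + exact: h5.
  + exact: h6.
  + move=> a /h7 [s [z [e [hs [ne ->]]]]]; exists s, (z * e); split => //; split => //.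
    exact: spanMulM.
  + move=> b hb; exists b; apply: h8 => x nx; exact: (Kkill b hb).
-
  pose S := spanMul (@Aall _ A) m.
  have S0 : S 0 by exact: spanMul0.
  have SD : forall x y, S x -> S y -> S (x + y) by move=> x y; exact: spanMulD.
  have SZ : forall (c : k) x, S x -> S (c *: x) by move=> c x; exact: spanMulZ'.
  have Sr : forall x a, S x -> S (a * x).
    move=> x a; elim=> [|u v _ mv|u v _ hu _ hv].
    + by rewrite mulr0.
    + by rewrite mulrA; apply: spanMulM.
    + by rewrite mulrDr; apply: SD.
  have Sl : forall g x, g \in G -> S x -> S (x * g).
    move=> g x hg; elim=> [|u v _ mv|u v _ hu _ hv].
    + by rewrite mul0r.
    + by rewrite -mulrA; apply: spanMulM => //; case: (ideal_r Im hg mv).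
    + by rewrite mulrDl; apply: SD.
  have Kkill : forall a, partOf G (fun x a => x * a) C S a -> forall x, n x -> S (x * a).
    move=> a pa x /nsub; elim=> [|y z y1 z2|u v _ hu _ hv].
    + by rewrite mul0r.
    + by rewrite -mulrA; apply: Sr; apply: (k2 a pa).
    + by rewrite mulrDl; apply: SD.
  have [f [[h1 h2 h3 h4] [h5 h6 h7 h8]]] :=
    @core_main k A G HG R HR (fun x y => y * x) (fun x y z => mulrA z y x) (@mul1r _)
      (fun x y z => mulrDr z x y) (fun x y z => mulrDl y z x) (fun c x y => esym (scalerAr c y x))
      (fun x y => mulNr y x) (fun x y => mulrN y x) (@mulr0 _)
      (fun x y hx hy => GM HG hy hx) (ideal_l (G:=G)) S S0 SD SZ Sr Sl C HC n Wn Kkill dec2.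
  exists f; split; last split; last split; last split; last split; last split; last split.
  + move=> a b [s [t [hs [ht e]]]]; refine (h1 (spanMul n (@Aall _ A)) _ a b t s ht hs _).
    * move=> Pr P0 Pop PD t0; elim=> [|u v nu _|u v _ hu _ hv]; [exact: P0|exact: Pop|exact: PD].
    * by rewrite e addrC.
  + by move=> a; exists n; split => // x nx; apply: h2.
  + exact: h3.
  + exact: h4.
  + exact: h6.
  + exact: h5.
  + move=> a /h7 [s [z [e [hs [ne ->]]]]]; exists (e * z), s; split; first exact: spanMulM.
    by split => //; rewrite addrC.
  + move=> b hb; exists b; apply: h8 => x nx; exact: (Kkill b hb).
Qed.
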